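(* Let $K$ be a finite group with trivial centre $Z(K)=1$, written additively as $(K,+)$. (1) Let $B$ be a skew left brace with additive group $(B,+)=K$ and multiplicative group $C=(B,\cdot)$. Then there exist subgroups $X$ and $Y$ of $\mathrm{Aut}(K)$ satisfying: (a) $XY = X\,\mathrm{Inn}(K) = Y\,\mathrm{Inn}(K)$; (b) there are subgroups $N, M \le \mathrm{Inn}(K)$ with $N \trianglelefteq X$ and $M \trianglelefteq Y$, and a group isomorphism $\gamma\colon Y/M \to X/N$ such that: whenever $x\in X$, $y\in Y$ satisfy $\gamma(yM)=xN$, we have $xy^{-1}\in \mathrm{Inn}(K)$; and for every $z\in \mathrm{Inn}(K)$ there exist $x\in X$, $y\in Y$ with $xN=\gamma(yM)$ and $xy^{-1}=z$; (c) $|K| = |X|\,|M| = |Y|\,|N|$; and moreover (d) $C$ has two normal subgroups $T$ and $V$ with $T\cap V=1$, $X\cong C/T$ and $Y\cong C/V$. (2) Conversely, if $X$ and $Y$ are subgroups of $\mathrm{Aut}(K)$ satisfying (a), (b), (c) (for some $N$, $M$, $\gamma$ as in (b)), then there exists a skew left brace $B$ with additive group $(B,+)=K$ whose multiplicative group $C=(B,\cdot)$ has two normal subgroups $T$, $V$ with $T\cap V=1$, $X\cong C/T$ and $Y\cong C/V$.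
   Context: A skew left brace is a set $B$ with two group structures $(B,+)$ (not necessarily abelian) and $(B,\cdot)$ such that $a(b+c) = ab - a + ac$ for all $a,b,c\in B$. Its additive group is $(B,+)$ and its multiplicative group is $(B,\cdot)$. $\mathrm{Inn}(K)$ denotes the group of inner automorphisms of $K$. Products of subgroups such as $XY$ denote the set $\{xy : x\in X, y\in Y\}$ inside $\mathrm{Aut}(K)$. *)

(* Defs.v *)
From HB Require Import structures.
From mathcomp Require Import all_boot all_order all_fingroup all_solvable.
Set Implicit Arguments. Unset Strict Implicit. Unset Printing Implicit Defensive.
Local Open Scope group_scope.

(* The finite group K (written additively in the paper) is a finGroupType,
   written multiplicatively in MathComp. Note: in MathComp, (p * q) x = q (p x), so the paper's
   composition  x o y  is the MathComp product  y * x. *)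

Definition Inn (K : finGroupType) : {set {perm K}} :=
  conj_aut [set: K]%G @* [set: K].

(* A skew left brace whose additive group is K: a finite group C (the
   multiplicative group (B,.)), with a bijection f : C -> K (with inverse g)
   identifying the underlying set of B with K, so that the addition of B is
   b + c := g (f b * f c), and the brace axiom a(b+c) = ab - a + ac holds. *)
Definition skew_brace_on (K C : finGroupType) (f : C -> K) (g : K -> C) : Prop :=
  [/\ cancel f g, cancel g f &
      forall a b c : C,
        f (a * g (f b * f c)) = f (a * b) * (f a)^-1 * f (a * c)].

(* Conditions (a), (b), (c) on subgroups X, Y of Aut(K).
   Paper's products (function composition) translated: XY = Y * X,
   X Inn(K) = Inn(K) * X, x y^{-1} = y^-1 * x. *)
Definition cond_abc (K : finGroupType) (X Y : {group {perm K}}) : Prop :=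
  ((Y * X = Inn K * X) /\ (Inn K * X = Inn K * Y)) /\
  exists (N M : {group {perm K}}) (gam : {morphism Y / M >-> coset_of N}),
    [/\ N \subset Inn K, M \subset Inn K, N <| X & M <| Y] /\
    [/\ isom (Y / M) (X / N) gam,
        (forall x y, x \in X -> y \in Y -> gam (coset M y) = coset N x ->
           y^-1 * x \in Inn K),
        (forall z, z \in Inn K -> exists x y, [/\ x \in X, y \in Y,
           coset N x = gam (coset M y) & y^-1 * x = z]) &
        #|[set: K]| = (#|X| * #|M|)%N /\ #|[set: K]| = (#|Y| * #|N|)%N].

Definition cond_d (K C : finGroupType) (X Y : {group {perm K}}) : Prop :=
  exists T V : {group C},
    [/\ T <| [set: C], V <| [set: C], T :&: V = 1,
        X \isog [set: C] / T & Y \isog [set: C] / V].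

(* Main.v *)
Require Import Defs.
From HB Require Import structures.
From mathcomp Require Import all_boot all_order all_fingroup all_solvable.
Set Implicit Arguments. Unset Strict Implicit. Unset Printing Implicit Defensive.
Local Open Scope group_scope.

Section Cj.
Variable K : finGroupType.
Definition cj (k : K) : {perm K} := conj_aut [set: K] k.

Lemma cjE k z : cj k z = z ^ k.
Proof. by rewrite /cj norm_conj_autE ?normT ?inE. Qed.

Lemma cjM k l : cj (k * l) = cj k * cj l.
Proof. by apply/permP=> z; rewrite permM !cjE conjgM. Qed.

Lemma cjV k : cj k^-1 = (cj k)^-1.
Proof. by apply: (mulgI (cj k)); rewrite -cjM !mulgV; apply/permP=> z; rewrite cjE conjg1 perm1. Qed.

Lemma cj_Aut k : cj k \in Aut [set: K].
Proof. apply: (subsetP (@Aut_conj_aut K [set: K]%G [set: K])); apply/morphimP; exists k; by rewrite ?normT ?inE. Qed.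

Lemma InnP z : reflect (exists k, z = cj k) (z \in Inn K).
Proof.
apply: (iffP idP).
  by case/morphimP=> k _ _ ->; exists k.
by case=> k ->; apply/morphimP; exists k; rewrite ?normT ?inE.
Qed.

Lemma cj_in k : cj k \in Inn K.
Proof. by apply/InnP; exists k. Qed.

Lemma cjJ (s : {perm K}) k : s \in Aut [set: K] -> s^-1 * cj k * s = cj (s k).
Proof.
move=> As; apply/permP=> z; rewrite !permM !cjE.
have sM := morphicP (Aut_morphic As).
have sV : s k^-1 = (s k)^-1 by exact: (morphV (autm As) (in_setT k)).
by rewrite /conjg !sM ?inE //= permKV sV.
Qed.
End Cj.

Section Cj2.
Variable K : finGroupType.
Hypothesis hZ : 'Z([set: K]) = 1.

Lemma cj_inj : injective (@cj K).
Proof.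
move=> k l e.
have fix1 z : z ^ (k * l^-1) = z.
  by rewrite conjgM -(cjE k z) e cjE -conjgM mulgV conjg1.
have : k * l^-1 \in 'Z([set: K]).
  apply/centerP; split; first by rewrite inE.
  move=> y _; rewrite /commute.
  move: (fix1 y); set m := k * l^-1 => fy.
  by rewrite -{1}fy conjgE !mulgA mulgV mul1g.
by rewrite hZ => /set1gP /eqP; rewrite mulg_eq1 => /eqP ->; rewrite invgK.
Qed.

Lemma card_Inn : #|Inn K| = #|[set: K]|.
Proof.
have -> : Inn K = (@cj K) @: [set: K].
  apply/setP=> z; apply/InnP/imsetP => [[k ->]|[k _ ->]]; by exists k.
by rewrite card_imset //; apply: cj_inj.
Qed.

Lemma InnJ (s i : {perm K}) : s \in Aut [set: K] -> i \in Inn K -> s^-1 * i * s \in Inn K.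
Proof. by move=> As /InnP[k ->]; rewrite cjJ // cj_in. Qed.
End Cj2.


Canonical Inn_group (K : finGroupType) := [group of Inn K].
Module GB.



Section Gour.
Variables (K C : finGroupType).
Hypothesis hZ : 'Z([set: K]) = 1.
Variables (phi psi : {morphism [set: C] >-> {perm K}}).
Hypotheses (phiA : forall a, phi a \in Aut [set: K])
           (psiA : forall a, psi a \in Aut [set: K])
           (muI : forall a, (psi a)^-1 * phi a \in Inn K)
           (muinj : injective (fun a => (psi a)^-1 * phi a))
           (musurj : forall z, z \in Inn K -> exists a, (psi a)^-1 * phi a = z).

Let X := (phi @* [set: C])%G.
Let Y := (psi @* [set: C])%G.

Lemma phiM a b : phi (a * b) = phi a * phi b. Proof. by rewrite morphM ?inE. Qed.
Lemma psiM a b : psi (a * b) = psi a * psi b. Proof. by rewrite morphM ?inE. Qed.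
Lemma phiV a : phi a^-1 = (phi a)^-1. Proof. by rewrite morphV ?inE. Qed.
Lemma psiV a : psi a^-1 = (psi a)^-1. Proof. by rewrite morphV ?inE. Qed.
Lemma phiX a : phi a \in X. Proof. by rewrite mem_morphim ?inE. Qed.
Lemma psiY a : psi a \in Y. Proof. by rewrite mem_morphim ?inE. Qed.

Lemma XP x : x \in X -> exists a, x = phi a.
Proof. by case/morphimP=> a _ _ ->; exists a. Qed.
Lemma YP y : y \in Y -> exists a, y = psi a.
Proof. by case/morphimP=> a _ _ ->; exists a. Qed.

Lemma nuI a : psi a * (phi a)^-1 \in Inn K.
Proof.
have := InnJ (groupVr (phiA a)) (groupVr (muI a)).
by rewrite invgK invMg invgK !mulgA mulgV mul1g.
Qed.

Lemma nuI' a : phi a * (psi a)^-1 \in Inn K.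
Proof.
have := InnJ (groupVr (psiA a)) (muI a).
by rewrite invgK !mulgA mulgV mul1g.
Qed.

Lemma goursat_a : (Y * X = Inn K * X) /\ (Inn K * X = Inn K * Y).
Proof.
split; apply/eqP; rewrite eqEsubset; apply/andP; split; apply/subsetP=> w /mulsgP[u v Hu Hv ->].
- have [a ->] := YP Hu; have [b ->] := XP Hv.
  rewrite -[psi a](mulgKV (phi a)) -mulgA; apply: mem_mulg; first exact: nuI.
  by rewrite -phiM phiX.
- have [a ea] := musurj Hu; have [b ->] := XP Hv.
  by rewrite -ea -mulgA -psiV -phiM mem_mulg ?psiY ?phiX.
- have [a ->] := XP Hv.
  rewrite -[phi a](mulgKV (psi a)) mulgA; apply: mem_mulg; last exact: psiY.
  by rewrite groupM ?nuI'.
- have [a ->] := YP Hv.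
  rewrite -[psi a](mulgKV (phi a)) mulgA; apply: mem_mulg; last exact: phiX.
  by rewrite groupM ?nuI.
Qed.

Let N := (phi @* 'ker psi)%G.
Let M := (psi @* 'ker phi)%G.

Lemma nNX : N <| X. Proof. exact: morphim_normal (ker_normal psi). Qed.
Lemma nMY : M <| Y. Proof. exact: morphim_normal (ker_normal phi). Qed.

Lemma sNI : N \subset Inn K.
Proof.
apply/subsetP=> x /morphimP[a _ Ka ->].
by have := muI a; rewrite (mker Ka) invg1 mul1g.
Qed.

Lemma sMI : M \subset Inn K.
Proof.
apply/subsetP=> x /morphimP[a _ Ka ->].
by have := groupVr (muI a); rewrite (mker Ka) mulg1 invgK.
Qed.

Lemma f1M : morphic [set: C] (fun a => coset N (phi a)).
Proof.
apply/morphicP=> a b _ _; rewrite phiM morphM //.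
  by rewrite (subsetP (normal_norm nNX)) ?phiX.
by rewrite (subsetP (normal_norm nNX)) ?phiX.
Qed.

Definition f1 := morphm f1M.

Lemma sK1 : 'ker psi \subset 'ker f1.
Proof.
apply/subsetP=> a Ka; rewrite !inE /= morphmE coset_id //.
by rewrite mem_morphim.
Qed.

Definition gam1 : {morphism Y >-> coset_of N} := factm_morphism sK1 (subxx [set: C]).

Lemma gam1E a : gam1 (psi a) = coset N (phi a).
Proof. exact: (factmE sK1 (subxx [set: C]) (in_setT a)). Qed.

Lemma sK2 : 'ker (coset M) \subset 'ker gam1.
Proof.
rewrite ker_coset; apply/subsetP=> y /morphimP[a _ Ka ->].
apply/kerP; first exact: psiY.
by rewrite gam1E (mker Ka) morph1.
Qed.

Definition gam : {morphism Y / M >-> coset_of N} :=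
  factm sK2 (normal_norm nMY).

Lemma gamE a : gam (coset M (psi a)) = coset N (phi a).
Proof. by rewrite -gam1E; exact: (factmE sK2 (normal_norm nMY) (psiY a)). Qed.

Lemma nN a : phi a \in 'N(N). Proof. by rewrite (subsetP (normal_norm nNX)) ?phiX. Qed.
Lemma nM a : psi a \in 'N(M). Proof. by rewrite (subsetP (normal_norm nMY)) ?psiY. Qed.

Lemma phiN a : phi a \in N -> exists2 c, psi c = psi a & phi c = 1.
Proof.
case/morphimP=> b _ Kb e; exists (a * b^-1).
  by rewrite psiM psiV (mker Kb) invg1 mulg1.
by rewrite phiM phiV e mulgV.
Qed.

Lemma gam_inj : 'injm gam.
Proof.
apply/subsetP=> u; rewrite !inE => /andP[Du gu].
move: gu; case/morphimP: Du => y Ny Yy ->{u}; have [a ea] := YP Yy; subst y.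
rewrite gamE => /eqP/(coset_idr (nN a))/phiN[c ec pc].
apply/eqP; apply: coset_id; rewrite -ec; apply: mem_morphim; rewrite ?inE //.
by apply/eqP.
Qed.

Lemma gam_im : gam @* (Y / M) = X / N.
Proof.
apply/eqP; rewrite eqEsubset; apply/andP; split; apply/subsetP=> w.
  case/morphimP=> u _ /morphimP[y Ny Yy ->] ->{w u}.
  have [a ->] := YP Yy; rewrite gamE; apply: mem_morphim; by rewrite ?nN ?phiX.
case/morphimP=> x Nx Xx ->{w}; have [a ->] := XP Xx.
apply/morphimP; exists (coset M (psi a)); last by rewrite gamE.
  by apply: mem_morphim; rewrite ?nM ?psiY.
by apply: mem_morphim; rewrite ?nM ?psiY.
Qed.

Lemma gam_isom : isom (Y / M) (X / N) gam.
Proof. by apply/isomP; split; [exact: gam_inj | exact: gam_im]. Qed.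

Lemma gam_rel x y : x \in X -> y \in Y -> gam (coset M y) = coset N x ->
  y^-1 * x \in Inn K.
Proof.
move=> /XP[b ->] /YP[a ->]; rewrite gamE => /esym /(rcoset_kercosetP (nN b) (nN a)).
rewrite mem_rcoset => /morphimP[c _ Kc e].
have -> : phi b = phi (c * a) by rewrite phiM -e mulgKV.
have -> : psi a = psi (c * a) by rewrite psiM (mker Kc) mul1g.
exact: muI.
Qed.

Lemma gam_surj z : z \in Inn K -> exists x y, [/\ x \in X, y \in Y,
           coset N x = gam (coset M y) & y^-1 * x = z].
Proof.
case/musurj=> a <-; exists (phi a), (psi a); split; rewrite ?phiX ?psiY //.
by rewrite gamE.
Qed.

Lemma Inn_mu : Inn K = (fun a => (psi a)^-1 * phi a) @: [set: C].
Proof.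
apply/eqP; rewrite eqEsubset; apply/andP; split; apply/subsetP=> z.
  by case/musurj=> a <-; apply/imsetP; exists a; rewrite ?inE.
by case/imsetP=> a _ ->.
Qed.

Lemma cardKC : #|[set: K]| = #|[set: C]|.
Proof. by rewrite -(card_Inn hZ) Inn_mu card_imset //. Qed.

Lemma cardM : #|M| = #|'ker phi|.
Proof.
rewrite /M /= morphimEsub ?subsetT //; apply: card_in_imset => a b Ka Kb e.
by apply: muinj => /=; rewrite (mker Ka) (mker Kb) e.
Qed.

Lemma cardN : #|N| = #|'ker psi|.
Proof.
rewrite /N /= morphimEsub ?subsetT //; apply: card_in_imset => a b Ka Kb e.
by apply: muinj => /=; rewrite (mker Ka) (mker Kb) e.
Qed.

Lemma cardXM : #|[set: K]| = (#|X| * #|M|)%N.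
Proof.
rewrite cardKC cardM /X /= card_morphim setIid mulnC Lagrange //.
exact: subsetT.
Qed.

Lemma cardYN : #|[set: K]| = (#|Y| * #|N|)%N.
Proof.
rewrite cardKC cardN /Y /= card_morphim setIid mulnC Lagrange //.
exact: subsetT.
Qed.

Lemma goursat_abc : cond_abc X Y.
Proof.
split; first exact: goursat_a.
exists N, M, gam; split; first by rewrite sNI sMI nNX nMY.
split; [exact: gam_isom | exact: gam_rel | | by split; [exact: cardXM|exact: cardYN]].
exact: gam_surj.
Qed.

Lemma goursat_d : cond_d C X Y.
Proof.
exists ('ker phi)%G, ('ker psi)%G; split; try exact: ker_normal.
- apply/trivgP; apply/subsetP=> a /setIP[Ka Kb]; apply/set1P.
  by apply: muinj => /=; rewrite (mker Ka) (mker Kb) !morph1.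
- by rewrite isog_sym; exact: first_isog.
- by rewrite isog_sym; exact: first_isog.
Qed.

End Gour.

End GB.
Module GC.

Section Brace.
Variables (K C : finGroupType) (f : C -> K) (g : K -> C).
Hypothesis hb : skew_brace_on f g.

Lemma fK : cancel f g. Proof. by case: hb. Qed.
Lemma gK : cancel g f. Proof. by case: hb. Qed.
Lemma ax a b c : f (a * g (f b * f c)) = f (a * b) * (f a)^-1 * f (a * c).
Proof. by case: hb. Qed.

Lemma f1 : f 1 = 1.
Proof.
have := ax 1 (g 1) (g 1); rewrite !mul1g !gK mulg1 mul1g => e.
by rewrite mulg1 in e; rewrite -[f 1]invgK -e invg1.
Qed.

Lemma g1 : g 1 = 1.
Proof. by rewrite -f1 fK. Qed.

Definition lamf a x := (f a)^-1 * f (a * g x).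
Lemma lam_inj a : injective (lamf a).
Proof.
move=> x y /mulgI /(can_inj fK) /mulgI e.
by rewrite -(gK x) e gK.
Qed.
Definition lam a : {perm K} := perm (@lam_inj a).
Lemma lamE a x : lam a x = (f a)^-1 * f (a * g x). Proof. by rewrite permE. Qed.
Lemma lam_f a b : lam a (f b) = (f a)^-1 * f (a * b). Proof. by rewrite lamE fK. Qed.
Lemma fM a b : f (a * b) = f a * lam a (f b). Proof. by rewrite lam_f mulgA mulgV mul1g. Qed.

Lemma lamM a x y : lam a (x * y) = lam a x * lam a y.
Proof.
have := ax a (g x) (g y); rewrite !gK => e.
by rewrite !lamE e !mulgA.
Qed.

Lemma lam_Aut a : lam a \in Aut [set: K].
Proof.
rewrite inE; apply/andP; split; first by apply/subsetP=> x _; rewrite inE.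
by apply/morphicP=> x y _ _; exact: lamM.
Qed.

Lemma lamV a x : lam a x^-1 = (lam a x)^-1.
Proof. exact: (morphV (autm (lam_Aut a)) (in_setT x)). Qed.

Lemma lamMul a b : lam (a * b) = lam b * lam a.
Proof.
apply/permP=> z; rewrite permM -(gK z).
rewrite lam_f lam_f lamM lamV lam_f invMg invgK lam_f.
by rewrite !mulgA mulgK.
Qed.

Lemma phiM_ : morphic [set: C] (fun a => (lam a)^-1).
Proof. by apply/morphicP=> a b _ _; rewrite lamMul invMg. Qed.

Lemma psiM_ : morphic [set: C] (fun a => cj (f a) * (lam a)^-1).
Proof.
apply/morphicP=> a b _ _; rewrite lamMul invMg fM cjM.
have e : (lam a)^-1 * cj (f b) = cj (lam a (f b)) * (lam a)^-1.
  by rewrite -cjJ ?lam_Aut // mulgK.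
by rewrite !mulgA -[cj (f a) * _ * cj (f b)]mulgA e !mulgA.
Qed.

Definition bphi := morphm phiM_.
Definition bpsi := morphm psiM_.

Lemma lam_finv a : lam a (f a^-1) = (f a)^-1.
Proof.
have := fM a a^-1; rewrite mulgV f1 => e.
by rewrite -[lam a _]mul1g -(mulVg (f a)) -mulgA -e mulg1.
Qed.

Lemma bmuE a : (bpsi a)^-1 * bphi a = cj (f a^-1).
Proof.
rewrite /bpsi /bphi !morphmE invMg invgK -cjV.
by rewrite -{1}(invgK (lam a)) cjJ ?groupV ?lam_Aut // -lam_finv permK.

Qed.

Hypothesis hZ : 'Z([set: K]) = 1.

Lemma brace_goursat :
  [/\ (bphi @* [set: C])%G \subset Aut [set: K], (bpsi @* [set: C])%G \subset Aut [set: K],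
      cond_abc (bphi @* [set: C])%G (bpsi @* [set: C])%G & cond_d C (bphi @* [set: C])%G (bpsi @* [set: C])%G].
Proof.
have phiA a : bphi a \in Aut [set: K] by rewrite /bphi morphmE groupV lam_Aut.
have psiA a : bpsi a \in Aut [set: K] by rewrite /bpsi morphmE groupM ?groupV ?lam_Aut ?cj_Aut.
have muI a : (bpsi a)^-1 * bphi a \in Inn K by rewrite bmuE cj_in.
have muinj : injective (fun a => (bpsi a)^-1 * bphi a).
  move=> a b /=; rewrite !bmuE => /(cj_inj hZ) /(can_inj fK); exact: invg_inj.
have musurj z : z \in Inn K -> exists a, (bpsi a)^-1 * bphi a = z.
  by case/InnP=> k ->; exists (g k)^-1; rewrite bmuE invgK gK.
split.
- by apply/subsetP=> x /morphimP[a _ _ ->].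
- by apply/subsetP=> x /morphimP[a _ _ ->].
- exact: (GB.goursat_abc hZ phiA psiA muI muinj musurj).
- exact: (GB.goursat_d muinj).
Qed.
End Brace.

End GC.
Module GD.

Section Conv.
Variable K : finGroupType.
Hypothesis hZ : 'Z([set: K]) = 1.
Variables (X Y N M : {group {perm K}}) (gam : {morphism Y / M >-> coset_of N}).
Hypotheses (sXA : X \subset Aut [set: K]) (sYA : Y \subset Aut [set: K])
  (nNX : N <| X) (nMY : M <| Y) (giso : isom (Y / M) (X / N) gam)
  (grel : forall x y, x \in X -> y \in Y -> gam (coset M y) = coset N x ->
           y^-1 * x \in Inn K)
  (gsurj : forall z, z \in Inn K -> exists x y, [/\ x \in X, y \in Y,
           coset N x = gam (coset M y) & y^-1 * x = z])
  (cY : #|[set: K]| = (#|Y| * #|N|)%N).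

Definition Gset : {set {perm K} * {perm K}} :=
  [set p | [&& p.1 \in X, p.2 \in Y & gam (coset M p.2) == coset N p.1]].

Lemma nN x : x \in X -> x \in 'N(N). Proof. by move=> Xx; rewrite (subsetP (normal_norm nNX)). Qed.
Lemma nM y : y \in Y -> y \in 'N(M). Proof. by move=> Yy; rewrite (subsetP (normal_norm nMY)). Qed.

Lemma Gset_group : group_set Gset.
Proof.
apply/group_setP; split.
  by rewrite inE /= !group1 !morph1 ?group1 // eqxx.
move=> [x1 y1] [x2 y2]; rewrite !inE /= => /and3P[X1 Y1 /eqP e1] /and3P[X2 Y2 /eqP e2].
rewrite !groupM //= morphM ?nM // morphM ?mem_quotient // e1 e2.
by rewrite morphM ?nN.
Qed.

Canonical G := Group Gset_group.
Definition C := subg_of G.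

Lemma GP (c : C) : [/\ (sgval c).1 \in X, (sgval c).2 \in Y &
   gam (coset M (sgval c).2) = coset N (sgval c).1].
Proof. by have := subgP c; rewrite inE => /and3P[-> -> /eqP]. Qed.

Lemma cphiM : morphic [set: C] (fun c => (sgval c).1).
Proof. by apply/morphicP. Qed.
Lemma cpsiM : morphic [set: C] (fun c => (sgval c).2).
Proof. by apply/morphicP. Qed.
Definition cphi : {morphism [set: C] >-> {perm K}} := morphm_morphism cphiM.
Definition cpsi : {morphism [set: C] >-> {perm K}} := morphm_morphism cpsiM.
Lemma cphiE c : cphi c = (sgval c).1. Proof. by []. Qed.
Lemma cpsiE c : cpsi c = (sgval c).2. Proof. by []. Qed.

Lemma mkC x y : x \in X -> y \in Y -> gam (coset M y) = coset N x ->
  exists c : C, sgval c = (x, y).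
Proof.
move=> Xx Yy e; have h : (x, y) \in G by rewrite inE /= Xx Yy e eqxx.
by exists (Subg h).
Qed.

Lemma sgvalE (c : C) : sgval c = (cphi c, cpsi c).
Proof. by case: c => -[x y] h. Qed.

Lemma im_cphi : cphi @* [set: C] = X.
Proof.
have [_ im] := isomP giso.
apply/eqP; rewrite eqEsubset; apply/andP; split; apply/subsetP=> x.
  by case/morphimP=> c _ _ ->; have [] := GP c.
move=> Xx; have : coset N x \in X / N by rewrite mem_quotient.
rewrite -im => /morphimP[u _ /morphimP[y _ Yy ->] e].
have [c ec] := mkC Xx Yy (esym e).
by apply/morphimP; exists c; rewrite ?inE // cphiE ec.
Qed.

Lemma im_cpsi : cpsi @* [set: C] = Y.
Proof.
have [_ im] := isomP giso.
apply/eqP; rewrite eqEsubset; apply/andP; split; apply/subsetP=> y.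
  by case/morphimP=> c _ _ ->; have [] := GP c.
move=> Yy; have : gam (coset M y) \in X / N.
  by rewrite -im; apply: mem_morphim; rewrite ?mem_quotient ?nM.
case/morphimP=> x _ Xx e.
have [c ec] := mkC Xx Yy e.
by apply/morphimP; exists c; rewrite ?inE // cpsiE ec.
Qed.

Lemma cmuI c : (cpsi c)^-1 * cphi c \in Inn K.
Proof. by have [Xx Yy e] := GP c; rewrite cphiE cpsiE grel. Qed.

Lemma im_kcpsi : cphi @* 'ker cpsi = N.
Proof.
apply/eqP; rewrite eqEsubset; apply/andP; split; apply/subsetP=> x.
  case/morphimP=> c _ Kc ->; have [Xx Yy e] := GP c.
  move: e; rewrite -[(sgval c).2]/(cpsi c) (mker Kc) !morph1 => e.
  by apply: coset_idr; rewrite ?nN //; rewrite -e.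
move=> Nx; have Xx : x \in X by rewrite (subsetP (normal_sub nNX)).
have [c ec] : exists c : C, sgval c = (x, 1).
  by apply: mkC; rewrite ?group1 // !morph1 coset_id.
apply/morphimP; exists c; rewrite ?inE //.
  by rewrite cpsiE ec /= eqxx.
by rewrite cphiE ec.
Qed.

Lemma cardC : #|[set: C]| = #|[set: K]|.
Proof.
rewrite cY -im_cpsi -im_kcpsi card_morphim setIid.
rewrite morphimEsub ?subsetT // card_in_imset.
  by rewrite mulnC Lagrange // subsetT.
move=> a b Ka Kb e; apply: subg_inj; rewrite !sgvalE e (mker Ka) (mker Kb) //.
Qed.

Lemma Inn_cmu : (fun c => (cpsi c)^-1 * cphi c) @: [set: C] = Inn K.
Proof.
apply/eqP; rewrite eqEsubset; apply/andP; split; apply/subsetP=> z.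
  by case/imsetP=> c _ ->; apply: cmuI.
case/gsurj=> x [y [Xx Yy e ez]]; have [c ec] := mkC Xx Yy (esym e).
by apply/imsetP; exists c; rewrite ?inE // cphiE cpsiE ec.
Qed.

Lemma cmu_inj : injective (fun c => (cpsi c)^-1 * cphi c).
Proof.
move=> a b e.
have : #|(fun c => (cpsi c)^-1 * cphi c) @: [set: C]| == #|[set: C]|.
  by rewrite Inn_cmu (card_Inn hZ) cardC.
by move/imset_injP; apply; rewrite ?inE.
Qed.

Lemma cnuI c : cphi c * (cpsi c)^-1 \in Inn K.
Proof.
have [_ Yy _] := GP c.
have Ay : (cpsi c)^-1 \in Aut [set: K] by rewrite groupV (subsetP sYA).
have := InnJ Ay (cmuI c).
by rewrite invgK !mulgA mulgV mul1g.
Qed.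

Definition cf (c : C) : K := odflt 1 [pick k | cj k == cphi c * (cpsi c)^-1].

Lemma cfE c : cj (cf c) = cphi c * (cpsi c)^-1.
Proof.
rewrite /cf; case: pickP => [k /eqP //|none].
case/InnP: (cnuI c) => k ek; by have := none k; rewrite ek eqxx.
Qed.

Lemma cf_inj : injective cf.
Proof.
move=> a b e; have := congr1 (@cj K) e; rewrite !cfE => e2.
have e3 : (cphi b)^-1 * cphi a = (cpsi b)^-1 * cpsi a.
  by rewrite -(mulgKV (cpsi a) (cphi a)) e2 !mulgA mulVg mul1g.
have : (cpsi (b^-1 * a))^-1 * cphi (b^-1 * a) = (cpsi 1)^-1 * cphi 1.
  rewrite !morph1 invg1 mulg1 !morphM ?inE // !morphV ?inE // e3.
  by rewrite invMg invgK !mulgA mulgK mulVg.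
move/cmu_inj/eqP; rewrite -(inj_eq (mulgI b)) mulKVg mulg1 => /eqP //.
Qed.

Lemma sA c : (cpsi c)^-1 \in Aut [set: K].
Proof. by have [_ Yy _] := GP c; rewrite groupV (subsetP sYA). Qed.

Lemma cfM a b : cf (a * b) = cf a * ((cpsi a)^-1 : {perm K}) (cf b).
Proof.
apply: (cj_inj hZ); rewrite cjM -cjJ ?sA // invgK !cfE !morphM ?inE //.
by rewrite invMg !mulgA mulgKV.
Qed.

Lemma cf_bij : bijective cf.
Proof. by apply: (@inj_card_bij (subg_of G) K cf cf_inj); rewrite -!cardsT cardC. Qed.

Lemma conv_main : exists (C : finGroupType) (f : C -> K) (g : K -> C),
       skew_brace_on f g /\ cond_d C X Y.
Proof.
have [g fK gK] := cf_bij.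
exists C, cf, g; split.
  split => // a b c; rewrite !cfM gK.
  have sM := morphicP (Aut_morphic (sA a)).
  by rewrite sM ?inE // !mulgA mulgKV.
have [T [V [nT nV TV iX iY]]] := GB.goursat_d cmu_inj.
exists T, V; split => //.
  by move: iX; rewrite /= im_cphi.
by move: iY; rewrite /= im_cpsi.
Qed.

End Conv.

End GD.

Theorem theoremA (K : finGroupType) (hZ : 'Z([set: K]) = 1) :
  (forall (C : finGroupType) (f : C -> K) (g : K -> C),
     skew_brace_on f g ->
     exists X Y : {group {perm K}},
       [/\ X \subset Aut [set: K], Y \subset Aut [set: K],
           cond_abc X Y & cond_d C X Y]) /\
  (forall X Y : {group {perm K}},
     X \subset Aut [set: K] -> Y \subset Aut [set: K] -> cond_abc X Y ->
     exists (C : finGroupType) (f : C -> K) (g : K -> C),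
       skew_brace_on f g /\ cond_d C X Y).
Proof.
split.
  move=> C f g hb; exists (GC.bphi hb @* [set: C])%G, (GC.bpsi hb @* [set: C])%G.
  exact: GC.brace_goursat hb hZ.
move=> X Y sXA sYA [_ [N [M [gam [[sNI sMI nNX nMY] [giso grel gsurj [cX cY]]]]]]].
exact: (GD.conv_main hZ sYA nNX nMY giso grel gsurj cY).
Qed.
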